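(* Let $\mathcal{X}$ be a separable infinite-dimensional complex Banach space, $T\in\mathcal{B}(\mathcal{X})$, and $\mathcal{M}$ a nontrivial closed subspace of $\mathcal{X}$. Suppose there are an increasing sequence $(n_k)_{k\in\mathbb{N}}$ of positive integers and two subsets $D_1,D_2\subseteq\mathcal{M}$, each dense in $\mathcal{M}$, such that: (a) for every $y\in D_2$ there is a sequence $(x_k)_{k}$ in $\mathcal{M}$ with $\|x_k\|\to0$ and $T^{n_k}x_k\to y$ as $k\to\infty$; (b) for every $x\in D_1$ (and every $y\in D_2$ with the sequence $(x_k)$ from (a)), $\|T^{n_k}x\|\,\|x_k\|\to0$ as $k\to\infty$; (c) $T^{n_k}\mathcal{M}\subseteq\mathcal{M}$ for all $k$. Then $T$ is $\mathcal{M}$-diskcyclic.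
   Context: $\mathbb{D}=\{\alpha\in\mathbb{C}:|\alpha|\le1\}$. $T$ is $\mathcal{M}$-diskcyclic if there is $x\in\mathcal{X}$ such that $\{\alpha T^nx:\alpha\in\mathbb{D},\ n=0,1,2,\dots\}\cap\mathcal{M}$ is dense in $\mathcal{M}$. *)

(* Defs.v *)
From Stdlib Require Import Reals.
Open Scope R_scope.

Definition C : Type := (R * R)%type.
Definition C0 : C := (0, 0).
Definition C1 : C := (1, 0).
Definition Cplus (a b : C) : C := (fst a + fst b, snd a + snd b).
Definition Cmult (a b : C) : C :=
  (fst a * fst b - snd a * snd b, fst a * snd b + snd a * fst b).
Definition Cmod (a : C) : R := sqrt (fst a ^ 2 + snd a ^ 2).

Record CBanach : Type := {
  carrier :> Type;
  vzero : carrier;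
  vadd : carrier -> carrier -> carrier;
  vopp : carrier -> carrier;
  vscal : C -> carrier -> carrier;
  norm : carrier -> R;
  vadd_assoc : forall x y z, vadd x (vadd y z) = vadd (vadd x y) z;
  vadd_comm : forall x y, vadd x y = vadd y x;
  vadd_0 : forall x, vadd vzero x = x;
  vadd_opp : forall x, vadd x (vopp x) = vzero;
  vscal_assoc : forall a b x, vscal a (vscal b x) = vscal (Cmult a b) x;
  vscal_1 : forall x, vscal C1 x = x;
  vscal_distr_v : forall a x y, vscal a (vadd x y) = vadd (vscal a x) (vscal a y);
  vscal_distr_s : forall a b x, vscal (Cplus a b) x = vadd (vscal a x) (vscal b x);
  norm_nonneg : forall x, 0 <= norm x;
  norm_eq0 : forall x, norm x = 0 -> x = vzero;
  norm_scal : forall a x, norm (vscal a x) = Cmod a * norm x;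
  norm_triangle : forall x y, norm (vadd x y) <= norm x + norm y;
  complete : forall u : nat -> carrier,
    (forall eps, eps > 0 -> exists N : nat, forall p q, (p >= N)%nat -> (q >= N)%nat ->
        norm (vadd (u p) (vopp (u q))) < eps) ->
    exists l, Un_cv (fun k => norm (vadd (u k) (vopp l))) 0
}.

Arguments vzero {_}.
Arguments vadd {_} _ _.
Arguments vopp {_} _.
Arguments vscal {_} _ _.
Arguments norm {_} _.

Definition vsub {X : CBanach} (x y : X) : X := vadd x (vopp y).

Fixpoint lincomb {X : CBanach} (n : nat) (c : nat -> C) (v : nat -> X) : X :=
  match n with
  | O => vzero
  | S m => vadd (lincomb m c v) (vscal (c m) (v m))
  end.

Definition separable (X : CBanach) : Prop :=
  exists d : nat -> X, forall (x : X) eps, eps > 0 -> exists n, norm (vsub x (d n)) < eps.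

Definition infinite_dimensional (X : CBanach) : Prop :=
  forall n : nat, exists v : nat -> X,
    forall c : nat -> C, lincomb n c v = vzero -> forall i, (i < n)%nat -> c i = C0.

Definition bounded_linear {X : CBanach} (T : X -> X) : Prop :=
  (forall x y, T (vadd x y) = vadd (T x) (T y)) /\
  (forall a x, T (vscal a x) = vscal a (T x)) /\
  (exists K, forall x, norm (T x) <= K * norm x).

Definition closed_subspace {X : CBanach} (M : X -> Prop) : Prop :=
  M vzero /\
  (forall x y, M x -> M y -> M (vadd x y)) /\
  (forall a x, M x -> M (vscal a x)) /\
  (forall (u : nat -> X) l, (forall k, M (u k)) ->
      Un_cv (fun k => norm (vsub (u k) l)) 0 -> M l).

Definition nontrivial {X : CBanach} (M : X -> Prop) : Prop :=
  (exists x, M x /\ x <> vzero) /\ (exists x, ~ M x).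

Definition dense_in {X : CBanach} (D M : X -> Prop) : Prop :=
  (forall x, D x -> M x) /\
  (forall y, M y -> forall eps, eps > 0 -> exists x, D x /\ norm (vsub x y) < eps).

Definition M_diskcyclic {X : CBanach} (T : X -> X) (M : X -> Prop) : Prop :=
  exists x : X, forall y, M y -> forall eps, eps > 0 ->
    exists (a : C) (n : nat), Cmod a <= 1 /\ M (vscal a (Nat.iter n T x)) /\
      norm (vsub (vscal a (Nat.iter n T x)) y) < eps.

(* Main.v *)
Require Import Defs.
From Stdlib Require Import Reals.
Open Scope R_scope.
From Stdlib Require Import Reals Lra Lia Classical ClassicalEpsilon Arith.Cantor.
Import Defs.
Open Scope R_scope.

Section Alg.
Variable X : CBanach.
Implicit Types x y z u v w : X.

Lemma vadd_0r x : vadd x vzero = x.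
Proof. rewrite vadd_comm; apply vadd_0. Qed.

Lemma vopp_unique x w : vadd x w = vzero -> w = vopp x.
Proof.
  intro H.
  rewrite <- (vadd_0 _ w), <- (vadd_opp _ x), (vadd_comm _ x (vopp x)), <- vadd_assoc, H.
  apply vadd_0r.
Qed.

Lemma Cpair_eq (a b c d : R) : a = c -> b = d -> ((a, b) : Defs.C) = (c, d).
Proof. intros; subst; reflexivity. Qed.

Lemma vscal_0 x : vscal C0 x = vzero.
Proof.
  assert (H : vscal C0 x = vadd (vscal C0 x) (vscal C0 x)).
  { rewrite <- vscal_distr_s. f_equal. unfold C0, Cplus; simpl. apply Cpair_eq; ring. }
  assert (H2 := vadd_opp _ (vscal C0 x)).
  rewrite H in H2 at 1. rewrite <- vadd_assoc, vadd_opp, vadd_0r in H2. exact H2.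
Qed.

Definition Cm1 : Defs.C := (-1, 0).

Lemma vopp_scal x : vopp x = vscal Cm1 x.
Proof.
  symmetry; apply vopp_unique.
  rewrite <- (vscal_1 _ x) at 1. rewrite <- vscal_distr_s.
  replace (Cplus C1 Cm1) with C0 by (unfold Cplus, C1, Cm1, C0; simpl; apply Cpair_eq; ring).
  apply vscal_0.
Qed.

Lemma Cmod_real (c : R) : Cmod (c, 0) = Rabs c.
Proof.
  unfold Cmod; simpl. rewrite <- sqrt_Rsqr_abs. f_equal. unfold Rsqr; ring.
Qed.

Lemma norm_opp x : norm (vopp x) = norm x.
Proof.
  rewrite vopp_scal, norm_scal. unfold Cm1. rewrite Cmod_real, Rabs_left, Rmult_comm by lra; ring.
Qed.

Lemma Cmult_comm (a b : Defs.C) : Cmult a b = Cmult b a.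
Proof. destruct a, b; unfold Cmult; simpl; apply Cpair_eq; ring. Qed.

Lemma vscal_opp a x : vscal a (vopp x) = vopp (vscal a x).
Proof.
  rewrite !vopp_scal, !vscal_assoc, Cmult_comm. reflexivity.
Qed.

Lemma vopp_add x y : vopp (vadd x y) = vadd (vopp x) (vopp y).
Proof. rewrite !vopp_scal; apply vscal_distr_v. Qed.

Lemma vopp_opp x : vopp (vopp x) = x.
Proof. symmetry; apply vopp_unique. rewrite vadd_comm; apply vadd_opp. Qed.

Lemma vscal_sub a x y : vscal a (vsub x y) = vsub (vscal a x) (vscal a y).
Proof. unfold vsub. rewrite vscal_distr_v, vscal_opp. reflexivity. Qed.

Lemma vsub_sym x y : vsub y x = vopp (vsub x y).
Proof. unfold vsub. rewrite vopp_add, vopp_opp, vadd_comm. reflexivity. Qed.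

Lemma dist_sym x y : norm (vsub y x) = norm (vsub x y).
Proof. rewrite vsub_sym, norm_opp; reflexivity. Qed.

Lemma vsub_chain u v w : vsub u w = vadd (vsub u v) (vsub v w).
Proof.
  unfold vsub. rewrite <- vadd_assoc. f_equal.
  rewrite vadd_assoc, (vadd_comm _ (vopp v) v), vadd_opp, vadd_0. reflexivity.
Qed.

Lemma dist_tri u v w : norm (vsub u w) <= norm (vsub u v) + norm (vsub v w).
Proof. rewrite (vsub_chain u v w); apply norm_triangle. Qed.

Lemma vsub_addl p q y : vsub (vadd p q) y = vadd p (vsub q y).
Proof. unfold vsub; rewrite vadd_assoc; reflexivity. Qed.

Lemma vsub_add_self s w : vsub (vadd s w) s = w.
Proof.
  unfold vsub. rewrite (vadd_comm _ s w), <- vadd_assoc, vadd_opp, vadd_0r. reflexivity.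
Qed.

Lemma vsub_self x : vsub x x = vzero.
Proof. apply vadd_opp. Qed.

Lemma norm_zero : norm (@vzero X) = 0.
Proof.
  rewrite <- (vscal_0 vzero), norm_scal. unfold C0. rewrite Cmod_real, Rabs_R0. ring.
Qed.

Variable T : X -> X.
Hypothesis Tadd : forall x y, T (vadd x y) = vadd (T x) (T y).
Hypothesis Tscal : forall a x, T (vscal a x) = vscal a (T x).

Lemma iter_add m x y : Nat.iter m T (vadd x y) = vadd (Nat.iter m T x) (Nat.iter m T y).
Proof. induction m; simpl; [reflexivity| rewrite IHm; apply Tadd]. Qed.
Lemma iter_scal m a x : Nat.iter m T (vscal a x) = vscal a (Nat.iter m T x).
Proof. induction m; simpl; [reflexivity| rewrite IHm; apply Tscal]. Qed.
Lemma iter_sub m x y : Nat.iter m T (vsub x y) = vsub (Nat.iter m T x) (Nat.iter m T y).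
Proof. unfold vsub. rewrite iter_add, !vopp_scal, iter_scal. reflexivity. Qed.

Variable K : R.
Hypothesis HK : forall x, norm (T x) <= K * norm x.

Lemma iter_bound m x : norm (Nat.iter m T x) <= (Rmax 1 K) ^ m * norm x.
Proof.
  induction m; simpl.
  - lra.
  - eapply Rle_trans; [apply HK|].
    assert (0 <= norm (Nat.iter m T x)) by apply norm_nonneg.
    assert (K <= Rmax 1 K) by apply Rmax_r.
    assert (1 <= Rmax 1 K) by apply Rmax_l.
    apply Rle_trans with (Rmax 1 K * norm (Nat.iter m T x)).
    + apply Rmult_le_compat_r; auto.
    + rewrite Rmult_assoc. apply Rmult_le_compat_l; lra.
Qed.

End Alg.

Lemma un_cv_lt (u : nat -> R) eps : Un_cv u 0 -> eps > 0 -> exists N, forall k, (k >= N)%nat -> u k < eps.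
Proof.
  intros H He. destruct (H eps He) as [N HN]. exists N. intros k Hk.
  specialize (HN k Hk). unfold R_dist in HN. rewrite Rminus_0_r in HN.
  apply Rabs_def2 in HN. lra.
Qed.

Section Main.
Variable X : CBanach.
Variable T : X -> X.
Variables (M : X -> Prop) (n : nat -> nat) (D1 D2 : X -> Prop).
Hypothesis HT : bounded_linear T.
Hypothesis HM : closed_subspace M.
Hypothesis HD1 : dense_in D1 M.
Hypothesis Hab : forall y, D2 y -> exists xs : nat -> X,
      (forall k, M (xs k)) /\
      Un_cv (fun k => norm (xs k)) 0 /\
      Un_cv (fun k => norm (vsub (Nat.iter (n k) T (xs k)) y)) 0 /\
      (forall x, D1 x -> Un_cv (fun k => norm (Nat.iter (n k) T x) * norm (xs k)) 0).

Lemma step (s : X) (r t : R) (y : X) : D1 s -> 0 < r -> 0 < t -> D2 y ->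
 exists (s' : X) (r' : R) (k : nat) (a : Defs.C), D1 s' /\ norm (vsub s' s) < r /\ 0 < r' /\ r' <= r/2 /\ Cmod a <= 1 /\
  (forall z, norm (vsub z s') <= 2*r' -> norm (vsub (vscal a (Nat.iter (n k) T z)) y) < t).
Proof.
  intros Hs Hr Ht Hy.
  destruct HT as [Tadd [Tscal [K HK]]].
  destruct HM as [M0 [Madd [Mscal Mcl]]].
  destruct (Hab y Hy) as [xs [HxsM [HB [HE HP]]]].
  specialize (HP s Hs).
  assert (Hrt : r * t / 32 > 0) by (apply Rmult_lt_0_compat; [apply Rmult_lt_0_compat|]; lra).
  destruct (un_cv_lt _ (r/4) HB) as [N1 H1]; [lra|].
  destruct (un_cv_lt _ (t/8) HE) as [N2 H2]; [lra|].
  destruct (un_cv_lt _ (r*t/32) HP Hrt) as [N3 H3].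
  set (k := Nat.max N1 (Nat.max N2 N3)).
  specialize (H1 k ltac:(unfold k; lia)).
  specialize (H2 k ltac:(unfold k; lia)).
  specialize (H3 k ltac:(unfold k; lia)).
  simpl in H1, H2, H3.
  set (m := n k) in *.
  set (A := norm (Nat.iter m T s)) in *.
  set (B := norm (xs k)) in *.
  assert (HA0 : 0 <= A) by apply norm_nonneg.
  assert (HB0 : 0 <= B) by apply norm_nonneg.
  set (c := 1 + 8 * A / t).
  assert (Hc1 : 1 <= c).
  { unfold c. assert (0 <= 8 * A / t) by (unfold Rdiv; apply Rmult_le_pos; [lra| left; apply Rinv_0_lt_compat; lra]). lra. }
  set (z := vadd s (vscal (c, 0) (xs k))).
  assert (Hz : norm (vsub z s) < r / 2).
  { unfold z. rewrite vsub_add_self, norm_scal, Cmod_real, Rabs_right by lra. fold B.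
    assert (E : c * B * t = B * t + 8 * (A * B)) by (unfold c; field; lra).
    assert (c * B * t < r / 2 * t) by nra.
    apply Rmult_lt_reg_r with t; lra. }
  assert (zM : M z) by (unfold z; apply Madd; [apply (proj1 HD1); exact Hs| apply Mscal, HxsM]).
  set (L := Rmax 1 K ^ m).
  assert (HL : 1 <= L) by (unfold L; apply pow_R1_Rle, Rmax_l).
  set (rho := Rmin (r/2) (t / (8 * L))).
  assert (Hrho : rho > 0) by (unfold rho; apply Rmin_pos; [lra| apply Rdiv_lt_0_compat; lra]).
  destruct (proj2 HD1 z zM rho Hrho) as [s' [Hs' Hs'z]].
  exists s', (Rmin (r/2) (t / (4 * L))), k, (/ c, 0).
  assert (Hrho1 : rho <= r/2) by apply Rmin_l.
  assert (Hrho2 : rho <= t/(8*L)) by apply Rmin_r.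
  assert (Ha : Cmod (/ c, 0) = / c) by (rewrite Cmod_real; apply Rabs_right; left; apply Rinv_0_lt_compat; lra).
  assert (Hic : / c <= 1) by (rewrite <- Rinv_1; apply Rinv_le_contravar; lra).
  assert (Hic0 : 0 < / c) by (apply Rinv_0_lt_compat; lra).
  split; [exact Hs'|]. split.
  { eapply Rle_lt_trans; [apply (dist_tri _ s' z s)|]. lra. }
  split; [apply Rmin_pos; [lra| apply Rdiv_lt_0_compat; lra]|].
  split; [apply Rmin_l|]. split; [rewrite Ha; exact Hic|].
  intros z' Hz'.
  assert (DL : forall u v, norm (vsub (vscal (/ c, 0) (Nat.iter m T u)) (vscal (/ c, 0) (Nat.iter m T v)))
                   <= L * norm (vsub u v)).
  { intros u v. rewrite <- vscal_sub, <- iter_sub by assumption. rewrite norm_scal, Ha.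
    assert (H := iter_bound X T K HK m (vsub u v)). fold L in H.
    assert (0 <= norm (Nat.iter m T (vsub u v))) by apply norm_nonneg.
    assert (0 <= L * norm (vsub u v)) by (apply Rmult_le_pos; [lra| apply norm_nonneg]).
    nra. }
  assert (Ez : vscal (/ c, 0) (Nat.iter m T z) = vadd (vscal (/ c, 0) (Nat.iter m T s)) (Nat.iter m T (xs k))).
  { rewrite <- iter_scal by assumption. unfold z. rewrite vscal_distr_v, vscal_assoc.
    replace (Cmult (/ c, 0) (c, 0)) with C1.
    - rewrite vscal_1, iter_add by assumption. rewrite iter_scal by assumption. reflexivity.
    - unfold Cmult, C1; simpl. apply Cpair_eq; field; lra. }
  assert (Dz : norm (vsub (vscal (/ c, 0) (Nat.iter m T z)) y) < t/4).
  { rewrite Ez, vsub_addl. eapply Rle_lt_trans; [apply norm_triangle|].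
    rewrite norm_scal, Ha. fold A.
    assert (A < c * (t / 8)) by (unfold c; field_simplify; [|lra]; unfold Rdiv; nra).
    assert (/ c * A < t / 8).
    { apply Rmult_lt_reg_l with c; [lra|]. rewrite <- Rmult_assoc, Rinv_r, Rmult_1_l by lra. exact H. }
    lra. }
  assert (D1' : L * norm (vsub z' s') <= t / 2).
  { assert (Rmin (r / 2) (t / (4 * L)) <= t / (4 * L)) by apply Rmin_r.
    assert (L * (t / (4 * L)) = t / 4) by (field; lra).
    nra. }
  assert (D2' : L * norm (vsub s' z) <= t / 8).
  { assert (L * (t / (8 * L)) = t / 8) by (field; lra). nra. }
  fold m.
  eapply Rle_lt_trans; [apply (dist_tri _ _ (vscal (/ c, 0) (Nat.iter m T s')))|].
  eapply Rle_lt_trans; [apply Rplus_le_compat_l, (dist_tri _ _ (vscal (/ c, 0) (Nat.iter m T z)))|].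
  specialize (DL z' s'). assert (DL2 := DL). 
  assert (norm (vsub (vscal (/ c, 0) (Nat.iter m T s')) (vscal (/ c, 0) (Nat.iter m T z))) <= L * norm (vsub s' z)).
  { clear DL2 DL. apply (fun h => h) ; rewrite <- vscal_sub, <- iter_sub by assumption. rewrite norm_scal, Ha.
    assert (H := iter_bound X T K HK m (vsub s' z)). fold L in H.
    assert (0 <= norm (Nat.iter m T (vsub s' z))) by apply norm_nonneg.
    assert (0 <= L * norm (vsub s' z)) by (apply Rmult_le_pos; [lra| apply norm_nonneg]).
    nra. }
  lra.
Qed.
End Main.

Section Constr.
Variable X : CBanach.
Variable T : X -> X.
Variables (M : X -> Prop) (n : nat -> nat) (D1 D2 : X -> Prop).
Hypothesis HT : bounded_linear T.
Hypothesis HM : closed_subspace M.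
Hypothesis HD1 : dense_in D1 M.
Hypothesis HD2 : dense_in D2 M.
Hypothesis Hab : forall y, D2 y -> exists xs : nat -> X,
      (forall k, M (xs k)) /\
      Un_cv (fun k => norm (xs k)) 0 /\
      Un_cv (fun k => norm (vsub (Nat.iter (n k) T (xs k)) y)) 0 /\
      (forall x, D1 x -> Un_cv (fun k => norm (Nat.iter (n k) T x) * norm (xs k)) 0).
Hypothesis Hc : forall k x, M x -> M (Nat.iter (n k) T x).
Variable d : nat -> X.
Hypothesis Hd : forall (x : X) eps, eps > 0 -> exists n, norm (vsub x (d n)) < eps.
Variable s0 : X.
Hypothesis Hs0 : D1 s0.
Variable y0 : X.
Hypothesis Hy0 : D2 y0.

Definition tau (q : nat) : R := / INR (S q).
Lemma tau_pos q : 0 < tau q.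
Proof. unfold tau; apply Rinv_0_lt_compat, lt_0_INR; lia. Qed.

Lemma tgt_ex (i : nat) : exists y, D2 y /\ (forall y1, M y1 -> norm (vsub y1 (d (fst (of_nat i)))) < tau (snd (of_nat i))
   -> norm (vsub y (d (fst (of_nat i)))) < tau (snd (of_nat i))).
Proof.
  set (p := fst (of_nat i)). set (q := snd (of_nat i)).
  destruct (classic (exists y1, M y1 /\ norm (vsub y1 (d p)) < tau q)) as [[y1 [Hy1 Hy1d]]|Hn].
  - destruct (proj2 HD2 y1 Hy1 (tau q - norm (vsub y1 (d p)))) as [y [Hy Hyd]]; [lra|].
    exists y. split; [exact Hy|]. intros _ _ _.
    eapply Rle_lt_trans; [apply (dist_tri _ _ y1)|]. lra.
  - exists y0. split; [exact Hy0|]. intros y1 H1 H2. exfalso; apply Hn; eauto.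
Qed.

Definition tgt (i : nat) : X := proj1_sig (constructive_indefinite_description _ (tgt_ex i)).
Lemma tgt_spec i : D2 (tgt i) /\ (forall y1, M y1 -> norm (vsub y1 (d (fst (of_nat i)))) < tau (snd (of_nat i))
   -> norm (vsub (tgt i) (d (fst (of_nat i)))) < tau (snd (of_nat i))).
Proof. unfold tgt; destruct (constructive_indefinite_description _ _); auto. Qed.

Definition Pstep (s : X) (r : R) (i : nat) (p : (X * R) * (nat * Defs.C)) : Prop :=
  let s' := fst (fst p) in let r' := snd (fst p) in let k := fst (snd p) in let a := snd (snd p) in
  D1 s' /\ norm (vsub s' s) < r /\ 0 < r' /\ r' <= r/2 /\ Cmod a <= 1 /\
  (forall z, norm (vsub z s') <= 2*r' -> norm (vsub (vscal a (Nat.iter (n k) T z)) (tgt i)) < tau (snd (of_nat i))).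

Lemma step_total s r i : exists p, (D1 s -> 0 < r -> Pstep s r i p).
Proof.
  destruct (classic (D1 s /\ 0 < r)) as [[Hs Hr]|Hn].
  - destruct (step X T M n D1 D2 HT HM HD1 Hab s r (tau (snd (of_nat i))) (tgt i) Hs Hr (tau_pos _) (proj1 (tgt_spec i)))
      as [s' [r' [k [a H]]]].
    exists ((s', r'), (k, a)). intros _ _. exact H.
  - exists ((s, r), (O, C1)). intros H1 H2; exfalso; auto.
Qed.

Definition G s r i := proj1_sig (constructive_indefinite_description _ (step_total s r i)).
Lemma G_spec s r i : D1 s -> 0 < r -> Pstep s r i (G s r i).
Proof. unfold G; destruct (constructive_indefinite_description _ _); auto. Qed.

Fixpoint sq (i : nat) : X * R :=
  match i with O => (s0, 1) | S i => fst (G (fst (sq i)) (snd (sq i)) i) end.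
Definition s_ i := fst (sq i).
Definition r_ i := snd (sq i).

Lemma inv i : D1 (s_ i) /\ 0 < r_ i.
Proof.
  induction i; [split; [exact Hs0| unfold r_; simpl; lra]|].
  destruct IHi as [H1 H2]. assert (H := G_spec _ _ i H1 H2). destruct H as [A [_ [C _]]].
  split; assumption.
Qed.

Lemma stepP i : Pstep (s_ i) (r_ i) i (G (s_ i) (r_ i) i).
Proof. destruct (inv i); apply G_spec; auto. Qed.

Lemma s_S i : s_ (S i) = fst (fst (G (s_ i) (r_ i) i)).
Proof. reflexivity. Qed.
Lemma r_S i : r_ (S i) = snd (fst (G (s_ i) (r_ i) i)).
Proof. reflexivity. Qed.

Lemma step_facts i : norm (vsub (s_ (S i)) (s_ i)) < r_ i /\ r_ (S i) <= r_ i / 2.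
Proof.
  destruct (stepP i) as [_ [H1 [_ [H2 _]]]]. rewrite s_S, r_S. auto.
Qed.

Lemma chain i j : norm (vsub (s_ (i + j)) (s_ i)) + 2 * r_ (i + j) <= 2 * r_ i.
Proof.
  induction j.
  - rewrite Nat.add_0_r, vsub_self, norm_zero. lra.
  - replace (i + S j)%nat with (S (i + j)) by lia.
    destruct (step_facts (i + j)) as [H1 H2].
    assert (H3 := dist_tri _ (s_ (S (i + j))) (s_ (i + j)) (s_ i)). lra.
Qed.

Lemma r_bound i : r_ i * INR (S i) <= 1.
Proof.
  induction i.
  - unfold r_; simpl. lra.
  - destruct (step_facts i) as [_ H2]. destruct (inv (S i)) as [_ H3]. destruct (inv i) as [_ H4]. assert (r_ (S i) * (INR i + 1 + 1) <= r_ i / 2 * (INR i + 1 + 1)) by (apply Rmult_le_compat_r; [assert (0 <= INR i) by apply pos_INR; lra | exact H2]).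
    rewrite !S_INR. rewrite S_INR in IHi. assert (0 <= INR i) by apply pos_INR. nra.
Qed.

Lemma r_small eps : 0 < eps -> exists N, 4 * r_ N < eps.
Proof.
  intros He. destruct (archimed_cor1 (eps/4)) as [N [H1 H2]]; [lra|].
  exists N. assert (H := r_bound N). rewrite S_INR in H.
  assert (HN : 0 < INR N) by (apply lt_0_INR; lia).
  assert (Hw : / INR N * INR N = 1) by (field; lra).
  assert (0 < r_ N) by apply inv.
  assert (r_ N * INR N < 1) by lra.
  assert (r_ N < / INR N).
  { apply Rmult_lt_reg_r with (INR N); lra. }
  lra.
Qed.

Lemma cauchy : forall eps, eps > 0 -> exists N : nat, forall p q, (p >= N)%nat -> (q >= N)%nat ->
        norm (vadd (s_ p) (vopp (s_ q))) < eps.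
Proof.
  intros eps He. destruct (r_small eps He) as [N HN]. exists N. intros p q Hp Hq.
  assert (A1 := chain N (p - N)). assert (A2 := chain N (q - N)).
  replace (N + (p - N))%nat with p in A1 by lia. replace (N + (q - N))%nat with q in A2 by lia.
  assert (0 < r_ p) by apply inv. assert (0 < r_ q) by apply inv.
  fold (vsub (s_ p) (s_ q)).
  assert (Htr := dist_tri _ (s_ p) (s_ N) (s_ q)). rewrite (dist_sym _ (s_ q) (s_ N)) in Htr.
  lra.
Qed.

Theorem constr : M_diskcyclic T M.
Proof.
  destruct (complete X s_ cauchy) as [l Hl].
  destruct HM as [M0 [Madd [Mscal Mcl]]].
  assert (lM : M l).
  { apply (Mcl s_ l). - intro k. apply (proj1 HD1), inv. - exact Hl. }
  assert (Hls : forall i, norm (vsub l (s_ i)) <= 2 * r_ i).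
  { intro i. apply Rle_plus_epsilon. intros e He.
    destruct (Hl e He) as [N HN]. specialize (HN (i + N)%nat ltac:(lia)).
    unfold R_dist in HN. rewrite Rminus_0_r in HN. apply Rabs_def2 in HN.
    assert (A := chain i N).
    assert (0 < r_ (i + N)) by apply inv.
    assert (Htr := dist_tri _ l (s_ (i + N)) (s_ i)). rewrite (dist_sym _ (s_ (i+N)) l) in Htr. unfold vsub in Htr, A |- *. destruct HN. lra. }
  exists l. intros y Hy eps He.
  destruct (archimed_cor1 (eps/3)) as [q [Hq1 Hq2]]; [lra|].
  assert (Htq : tau q < eps / 3).
  { unfold tau. eapply Rlt_trans; [|exact Hq1]. apply Rinv_lt_contravar.
    - apply Rmult_lt_0_compat; apply lt_0_INR; lia.
    - apply lt_INR; lia. }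
  destruct (Hd y (tau q) (tau_pos q)) as [p Hp].
  set (i := to_nat (p, q)).
  assert (Hi : of_nat i = (p, q)) by apply cancel_of_to.
  destruct (tgt_spec i) as [_ Ht]. rewrite Hi in Ht; simpl in Ht.
  specialize (Ht y Hy Hp).
  destruct (stepP i) as [_ [_ [_ [_ [Ha Hz]]]]].
  set (k := fst (snd (G (s_ i) (r_ i) i))) in *.
  set (a := snd (snd (G (s_ i) (r_ i) i))) in *.
  specialize (Hz l). rewrite <- s_S, <- r_S in Hz. specialize (Hz (Hls (S i))).
  rewrite Hi in Hz; simpl in Hz.
  exists a, (n k). split; [exact Ha|]. split; [apply Mscal, Hc, lM|].
  eapply Rle_lt_trans; [apply (dist_tri _ _ (tgt i))|].
  eapply Rle_lt_trans; [apply Rplus_le_compat_l, (dist_tri _ _ (d p))|].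
  rewrite (dist_sym _ y (d p)). lra.
Qed.
End Constr.

Theorem mainTheorem6 (X : CBanach) (T : X -> X) (M : X -> Prop)
  (n : nat -> nat) (D1 D2 : X -> Prop)
  (HXsep : separable X) (HXinf : infinite_dimensional X)
  (HT : bounded_linear T)
  (HM : closed_subspace M) (HMnt : nontrivial M)
  (Hn_incr : forall k, (n k < n (S k))%nat) (Hn_pos : forall k, (1 <= n k)%nat)
  (HD1 : dense_in D1 M) (HD2 : dense_in D2 M)
  (Hab : forall y, D2 y -> exists xs : nat -> X,
      (forall k, M (xs k)) /\
      Un_cv (fun k => norm (xs k)) 0 /\
      Un_cv (fun k => norm (vsub (Nat.iter (n k) T (xs k)) y)) 0 /\
      (forall x, D1 x -> Un_cv (fun k => norm (Nat.iter (n k) T x) * norm (xs k)) 0))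
  (Hc : forall k x, M x -> M (Nat.iter (n k) T x)) :
  M_diskcyclic T M.
Proof.
  destruct HXsep as [d Hd].
  assert (M0 : M vzero) by apply HM.
  destruct (proj2 HD1 vzero M0 1 ltac:(lra)) as [s0 [Hs0 _]].
  destruct (proj2 HD2 vzero M0 1 ltac:(lra)) as [y0 [Hy0 _]].
  exact (constr X T M n D1 D2 HT HM HD1 HD2 Hab Hc d Hd s0 Hs0 y0 Hy0).
Qed.
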